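(* Let $G=(V,E)$ be a graph, let $r:V\to\mathbb{Z}_+$, and let $S\subseteq V$. Then the following are equivalent: (i) $S$ is a vector connectivity set for $(G,r)$; (ii) for every non-empty set $X\subseteq V$ such that $G[X]$ is connected and $R(X)>|N_G(X)|$, we have $S\cap X\neq\emptyset$.
   Context: All graphs are finite, simple and undirected; $\mathbb{Z}_+=\{0,1,2,\dots\}$. For $X\subseteq V$, $N_G(X)=\left(\bigcup_{v\in X}N_G(v)\right)\setminus X$ and $G[X]$ is the subgraph induced by $X$. For a vertex requirement function $r:V\to\mathbb{Z}_+$ and non-empty $X\subseteq V$, $R(X)=\max_{x\in X} r(x)$. For $S\subseteq V$ and $v\in V\setminus S$, a $v$--$S$ fan of order $k$ is a collection of $k$ paths $P_1,\dots,P_k$, each connecting $v$ to a vertex of $S$, such that $V(P_i)\cap V(P_j)=\{v\}$ for all $i<j$; $v$ is $k$-linked to $S$ if such a fan exists. A vector connectivity set for $(G,r)$ is a set $S\subseteq V$ such that every $v\in V\setminus S$ is $r(v)$-linked to $S$. *)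

(* Defs.v *)
(* A finite simple graph G = (V,E) is a symmetric, irreflexive
   relation e : rel T on a finite type T (the vertex set V = T). *)
From mathcomp Require Import all_boot.
Set Implicit Arguments. Unset Strict Implicit. Unset Printing Implicit Defensive.

Definition simple_graph (T : finType) (e : rel T) : Prop :=
  symmetric e /\ irreflexive e.

Definition nbhd (T : finType) (e : rel T) (X : {set T}) : {set T} :=
  [set y | (y \notin X) && [exists x in X, e x y]].

Definition induced_rel (T : finType) (e : rel T) (X : {set T}) : rel T :=
  [rel a b | [&& e a b, a \in X & b \in X]].

Definition induced_connected (T : finType) (e : rel T) (X : {set T}) : Prop :=
  forall x y, x \in X -> y \in X -> connect (induced_rel e X) x y.

Definition Rmax (T : finType) (r : T -> nat) (X : {set T}) : nat :=
  \max_(x in X) r x.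

Definition path_to (T : finType) (e : rel T) (v : T) (S : {set T}) (p : seq T) : bool :=
  [&& path e v p, uniq (v :: p) & last v p \in S].

Definition fan (T : finType) (e : rel T) (v : T) (S : {set T}) (k : nat)
    (P : 'I_k -> seq T) : Prop :=
  (forall i, path_to e v S (P i)) /\
  (forall i j, i != j -> forall x, x \in v :: P i -> x \in v :: P j -> x = v).

Definition k_linked (T : finType) (e : rel T) (v : T) (S : {set T}) (k : nat) : Prop :=
  exists P : 'I_k -> seq T, fan e v S P.

Definition vector_connectivity_set (T : finType) (e : rel T) (r : T -> nat)
    (S : {set T}) : Prop :=
  forall v, v \notin S -> k_linked e v S (r v).

(* Main.v *)
Require Import Defs.
From mathcomp Require Import all_boot.
From Stdlib Require Import Classical.
Set Implicit Arguments. Unset Strict Implicit. Unset Printing Implicit Defensive.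

Notation ind_rel := induced_rel.


Lemma path_ind_sub (T : finType) (e : rel T) (U : {set T}) a p :
  path (ind_rel e U) a p -> a \in U -> {subset a :: p <= U} /\ path e a p.
Proof.
elim: p a => [|b p IH] a /=; first by move=> _ aU; split=> // z; rewrite inE => /eqP->.
case/andP=> /and3P[eab _ bU] pp aU; have [H1 H2] := IH b pp bU.
split; last by rewrite eab.
move=> z; rewrite inE => /orP[/eqP->//|]; exact: H1.
Qed.

Lemma path_in_ind (T : finType) (e : rel T) (U : {set T}) a p :
  path e a p -> {subset a :: p <= U} -> path (ind_rel e U) a p.
Proof.
elim: p a => [|b p IH] a //= /andP[eab pp] sub.
have aU : a \in U by apply: sub; rewrite inE eqxx.
have bU : b \in U by apply: sub; rewrite !inE eqxx orbT.
apply/andP; split; first by rewrite /ind_rel /= eab aU bU.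
apply: IH => // z zin; apply: sub; by rewrite inE zin orbT.
Qed.

Lemma prefix_belast (T : eqType) (e : rel T) a p z :
  path e a p -> z \in belast a p ->
  exists p', [/\ path e a p', last a p' = z & {subset a :: p' <= belast a p}].
Proof.
elim: p a => [|b p IH] a //= /andP[eab pp]; rewrite inE => /orP[/eqP->|zin].
  by exists [::]; split => // w; rewrite !inE => ->.
have [p' [pp' lp' sp']] := IH b pp zin.
exists (b :: p'); split => //=; first by rewrite eab.
move=> w; rewrite inE => /orP[/eqP->|win]; first by rewrite inE eqxx.
by rewrite inE sp' ?orbT.
Qed.

Lemma suffix_from (T : eqType) (e : rel T) c q z :
  path e c q -> z \in q ->
  exists q', [/\ path e z q', last z q' = last c q & {subset z :: q' <= q}].
Proof.
elim: q c => [|b q IH] c //= /andP[ecb pq]; rewrite inE => /orP[/eqP->|zin].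
  by exists q; split.
have [q' [pq' lq' sq']] := IH b pq zin.
exists q'; split => // w win; by rewrite inE sq' ?orbT.
Qed.

Lemma trunc_first (T : eqType) (e : rel T) (X : pred T) a p :
  path e a p -> has X (a :: p) ->
  exists n, [/\ path e a (take n p), X (last a (take n p)) & ~~ has X (belast a (take n p))].
Proof.
elim: p a => [|b p IH] a /=.
  by move=> _ /orP[Xa|//]; exists 0.
case/andP=> eab pp Xl.
case Xa: (X a).
  by exists 0.
rewrite Xa /= in Xl.
have [n [h1 h2 h3]] := IH b pp Xl.
by exists n.+1 => /=; rewrite eab h1 h2 /= Xa.
Qed.

Lemma trunc_last (T : eqType) (e : rel T) (X : pred T) a p :
  path e a p -> has X (a :: p) ->
  exists c q, [/\ X c, path e c q, last c q = last a p, ~~ has X q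
     & (uniq (a :: p) -> uniq (c :: q)) /\ {subset c :: q <= a :: p}].
Proof.
elim: p a => [|b p IH] a /=.
  move=> _ /orP[Xa|//]; exists a, [::]; split => //; split => //.
case/andP=> eab pp.
case hp: (has X (b :: p)).
  have [c [q [h1 h2 h3 h4 [h5 h6]]]] := IH b pp hp.
  exists c, q; split => //; split.
    by case/andP=> _ /h5.
  by move=> w /h6 win; rewrite inE win orbT.
move=> /orP[Xa|]; last by move=> h; move: hp; rewrite /= h.
exists a, (b :: p); split => //=; first by rewrite eab.
  by rewrite /= in hp *; rewrite hp.
by split.
Qed.

Lemma first_exit (T : eqType) (e : rel T) (X : pred T) a p :
  path e a p -> X a -> ~~ X (last a p) ->
  exists y z, [/\ y \in p, ~~ X y, z \in a :: p, X z & e z y].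
Proof.
elim: p a => [|b p IH] a /=; first by move=> _ ->.
case/andP=> eab pp Xa Xl.
case Xb: (X b).
  have [y [z [h1 h2 h3 h4 h5]]] := IH b pp Xb Xl.
  exists y, z; split => //; first by rewrite inE h1 orbT.
  by rewrite inE h3 orbT.
exists b, a; split => //; by rewrite ?inE ?eqxx ?Xb.
Qed.

Definition vs (T : Type) (q : T * seq T) := q.1 :: q.2.
Definition ABpath (T : finType) (e : rel T) (A B : {set T}) (q : T * seq T) :=
  [&& path e q.1 q.2, q.1 \in A, last q.1 q.2 \in B & uniq (q.1 :: q.2)].
Definition family (T : finType) (e : rel T) (A B : {set T}) k (F : 'I_k -> T * seq T) :=
  (forall i, ABpath e A B (F i)) /\
  (forall i j, i != j -> forall z, z \in vs (F i) -> z \in vs (F j) -> False).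
Arguments family [T] e A B k F.
Definition sep (T : finType) (e : rel T) (A B X : {set T}) :=
  forall a p, a \in A -> path e a p -> last a p \in B -> has (mem X) (a :: p).

Lemma fam_choice (T : choiceType) k (P : 'I_k -> pred T) :
  (forall i, exists q, P i q) -> exists F : 'I_k -> T, forall i, P i (F i).
Proof. by move=> H; exists (fun i => xchoose (H i)) => i; apply: xchooseP. Qed.

Lemma fam_sub (T : finType) (e e' : rel T) A B k F :
  subrel e e' -> family e A B k F -> family e' A B k F.
Proof.
move=> sub [h1 h2]; split => // i; have /and4P[p1 p2 p3 p4] := h1 i.
by rewrite /ABpath (sub_path sub p1) p2 p3 p4.
Qed.

Lemma glue (T : finType) (e : rel T) (A B X : {set T}) k F1 F2 :
  sep e A B X -> #|X| <= k -> family e A X k F1 -> family e X B k F2 ->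
  exists F, family e A B k F.
Proof.
move=> sX cX [f1a f1b] [f2a f2b].
pose P1 := fun i (q : T * seq T) => [&& ABpath e A X q, all (fun z => z \in vs (F1 i)) (vs q)
     & ~~ has (mem X) (belast q.1 q.2)].
have [G1 HG1] : exists G1 : 'I_k -> T * seq T, forall i, P1 i (G1 i).
  apply: fam_choice => i; have /and4P[p1 p2 p3 p4] := f1a i.
  have hh : has (mem X) ((F1 i).1 :: (F1 i).2).
    by apply/hasP; exists (last (F1 i).1 (F1 i).2); [exact: mem_last | exact: p3].
  have [n [h1 h2 h3]] := trunc_first p1 hh.
  have h2' : last (F1 i).1 (take n (F1 i).2) \in X := h2.
  exists ((F1 i).1, take n (F1 i).2); rewrite /P1 /ABpath /= h1 p2 h2' h3 /=.
  rewrite andbT; apply/andP; split.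
    by move: (take_uniq n.+1 p4).
  apply/andP; split; first by rewrite /vs inE eqxx.
  by apply/allP => z /mem_take zin; rewrite /vs inE zin orbT.
pose P2 := fun j (q : T * seq T) => [&& ABpath e X B q, all (fun z => z \in vs (F2 j)) (vs q)
     & ~~ has (mem X) q.2].
have [G2 HG2] : exists G2 : 'I_k -> T * seq T, forall j, P2 j (G2 j).
  apply: fam_choice => j; have /and4P[p1 p2 p3 p4] := f2a j.
  have hh : has (mem X) ((F2 j).1 :: (F2 j).2) by rewrite /= p2.
  have [c [q [h1 h2 h3 h4 [h5 h6]]]] := trunc_last p1 hh.
  have h1' : c \in X := h1.
  have u1 : c \notin q by case/andP: (h5 p4).
  have u2 : uniq q by case/andP: (h5 p4).
  exists (c, q); rewrite /P2 /ABpath /= h1' h2 h3 p3 u1 h4 !andbT /=.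
  rewrite u2 /=; apply/andP; split; first by apply: h6; exact: mem_head.
  by apply/allP => z zq; apply: h6; rewrite inE zq orbT.
have g1d : forall i j, i != j -> forall z, z \in vs (G1 i) -> z \in vs (G1 j) -> False.
  move=> i j ij z zi zj; apply: (f1b i j ij z).
    by have /and3P[_ /allP H _] := HG1 i; apply: H.
  by have /and3P[_ /allP H _] := HG1 j; apply: H.
have g2d : forall i j, i != j -> forall z, z \in vs (G2 i) -> z \in vs (G2 j) -> False.
  move=> i j ij z zi zj; apply: (f2b i j ij z).
    by have /and3P[_ /allP H _] := HG2 i; apply: H.
  by have /and3P[_ /allP H _] := HG2 j; apply: H.
pose end1 i := last (G1 i).1 (G1 i).2.
pose st2 j := (G2 j).1.
have st2inj : injective st2.
  move=> j j' eq; apply/eqP; apply: contraT => ne; exfalso.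
  apply: (g2d j j' ne (st2 j)); first exact: mem_head.
  by rewrite eq; exact: mem_head.
have st2X : forall j, st2 j \in X by move=> j; have /and3P[/and4P[_ -> _ _] _ _] := HG2 j.
have e1X : forall i, end1 i \in X by move=> i; have /and3P[/and4P[_ _ -> _] _ _] := HG1 i.
have imX : [set st2 j | j in 'I_k] =i X.
  apply/subset_cardP.
    apply/eqP; rewrite eqn_leq; apply/andP; split.
      by apply: subset_leq_card; apply/subsetP => z /imsetP[j _ ->].
    by rewrite card_imset // card_ord.
  by apply/subsetP => z /imsetP[j _ ->].
have hm : forall i, exists j, st2 j == end1 i.
  by move=> i; move: (e1X i); rewrite -imX => /imsetP[j _ ->]; exists j.
pose m i := xchoose (hm i).
have hmi : forall i, st2 (m i) = end1 i by move=> i; apply/eqP; exact: (xchooseP (hm i)).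
have cross : forall i j z, z \in vs (G1 i) -> z \in (G2 j).2 -> False.
  move=> i j z z1 z2.
  have /and3P[/and4P[pa1 pa2 pa3 _] _ nh1] := HG1 i.
  have /and3P[/and4P[pb1 _ pb3 _] _ nh2] := HG2 j.
  have zX : z \notin X by apply: contraNN nh2 => zX; apply/hasP; exists z.
  have zb : z \in belast (G1 i).1 (G1 i).2.
    move: z1; rewrite /vs lastI mem_rcons inE => /orP[/eqP ez|//].
    by move: zX; rewrite ez (e1X i).
  have [p' [pp' lp' sp']] := prefix_belast pa1 zb.
  have [q' [pq' lq' sq']] := suffix_from pb1 z2.
  have := sX _ (p' ++ q') pa2.
  rewrite cat_path pp' lp' pq' last_cat lp' lq' pb3 => /(_ isT isT) /hasP[w].
  rewrite -cat_cons mem_cat => /orP[/sp' wb|wq'] wX.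
    by move: nh1 => /negP; apply; apply/hasP; exists w.
  have wq : w \in (G2 j).2 by apply: sq'; rewrite inE wq' orbT.
  by move: nh2 => /negP; apply; apply/hasP; exists w.
exists (fun i => ((G1 i).1, (G1 i).2 ++ (G2 (m i)).2)); split.
  move=> i /=.
  have /and3P[/and4P[pa1 pa2 pa3 pa4] _ _] := HG1 i.
  have /and3P[/and4P[pb1 _ pb3 pb4] _ _] := HG2 (m i).
  have el : last (G1 i).1 (G1 i).2 = (G2 (m i)).1 by rewrite -[RHS]/(st2 (m i)) hmi.
  rewrite /ABpath /= cat_path pa1 el pb1 last_cat el pb3 pa2 /=.
  change (uniq (((G1 i).1 :: (G1 i).2) ++ (G2 (m i)).2)).
  have uq : uniq (G2 (m i)).2 by case/andP: pb4.
  rewrite cat_uniq pa4 uq andbT /=.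
  apply/hasPn => z z2; apply/negP => z1; exact: (cross i (m i) z z1 z2).
move=> i j ij z; rewrite /vs /= -!cat_cons !mem_cat => /orP[zi|zi] /orP[zj|zj].
- exact: (g1d i j ij z).
- exact: (cross i (m j) z).
- exact: (cross j (m i) z).
- have mij : m i != m j.
    apply: contra ij => /eqP emij; apply: contraT => ne; exfalso.
    apply: (g1d i j ne (end1 i)); first by rewrite /end1 /vs lastI mem_rcons mem_head.
    by rewrite -hmi emij hmi /end1 /vs lastI mem_rcons mem_head.
  by apply: (g2d (m i) (m j) mij z); rewrite /vs inE ?zi ?zj orbT.
Qed.

Definition contr (T : finType) (e : rel T) (x y : T) : rel T :=
  fun u w => [&& u != y, w != y, u != w & (e u w || (u == x) && e y w || (w == x) && e u y)].
Definition merge (T : finType) (x y : T) (Z : {set T}) : {set T} :=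
  [set z | (z != y) && ((z \in Z) || (z == x) && (y \in Z))].
Definition proj (T : finType) (x y z : T) := if z == y then x else z.
Definition del (T : finType) (e : rel T) (x y : T) : rel T :=
  fun u w => e u w && ~~ ((u == x) && (w == y) || (u == y) && (w == x)).
Definition nedges (T : finType) (e : rel T) := #|[set u : T * T | e u.1 u.2]|.

Lemma contr_sym (T : finType) (e : rel T) x y : symmetric e -> symmetric (contr e x y).
Proof.
move=> se u w; rewrite /contr (eq_sym u w) (se u w) (se y w) (se y u).
by case: (u != y); case: (w != y); case: (w != u); case: (e w u); case: (u == x);
  case: (w == x); case: (e w y); case: (e u y).
Qed.

Lemma contr_irr (T : finType) (e : rel T) x y : irreflexive (contr e x y).
Proof. by move=> u; rewrite /contr eqxx /= !andbF. Qed.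

Lemma del_sym (T : finType) (e : rel T) x y : symmetric e -> symmetric (del e x y).
Proof.
move=> se u w; rewrite /del se; congr (_ && ~~ _).
by rewrite orbC (andbC (w == x)) (andbC (w == y)).
Qed.

Lemma del_irr (T : finType) (e : rel T) x y : irreflexive e -> irreflexive (del e x y).
Proof. by move=> ie u; rewrite /del ie. Qed.

Lemma del_sub (T : finType) (e : rel T) x y : subrel (del e x y) e.
Proof. by move=> u w /andP[]. Qed.

Lemma nedges_del (T : finType) (e : rel T) x y : e x y -> nedges (del e x y) < nedges e.
Proof.
move=> exy; apply: proper_card; apply/properP; split.
  by apply/subsetP => [[u w]]; rewrite !inE /del /= => /andP[].
by exists (x, y); rewrite !inE /del /= ?exy // !eqxx.
Qed.

Lemma nedges_contr (T : finType) (e : rel T) x y :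
  symmetric e -> e x y -> x != y -> nedges (contr e x y) < nedges e.
Proof.
move=> se exy nxy.
pose f (p : T * T) := if e p.1 p.2 then p else if p.1 == x then (y, p.2) else (p.1, y).
pose D := [set u : T * T | contr e x y u.1 u.2].
pose E := [set u : T * T | e u.1 u.2].
have fD : forall p, p \in D -> f p \in E :\ (x, y).
  move=> [u w]; rewrite !inE /contr /f /= => /and4P[uy wy uw H].
  case euw: (e u w); first by rewrite /= euw andbT; apply/negP => /eqP [_ ewy]; move: wy; rewrite ewy eqxx.
  rewrite euw /= in H.
  have [ux|nux] := eqVneq u x.
    subst u; rewrite eqxx /= in H uw *; move: H => /orP[eyw|/andP[/eqP wx _]]; last by move: uw; rewrite wx eqxx.
    rewrite eyw andbT; apply/negP => /eqP [yx _]; by move: nxy; rewrite yx eqxx.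
  rewrite (negbTE nux) /= in H *; move: H => /andP[_ euy].
  rewrite euy andbT; apply/negP => /eqP [ux]; by move: nux; rewrite ux eqxx.
have finj : {in D &, injective f}.
  move=> [u w] [u' w']; rewrite !inE /contr /f /= => /and4P[uy wy uw H] /and4P[uy' wy' uw' H'].
  case euw: (e u w); case euw': (e u' w') => //=.
  - case: ifP => _ [eq1 eq2]; [by move: uy; rewrite eq1 eqxx|by move: wy; rewrite eq2 eqxx].
  - case: ifP => _ [eq1 eq2]; [by move: uy'; rewrite -eq1 eqxx|by move: wy'; rewrite -eq2 eqxx].
  - rewrite euw /= in H; rewrite euw' /= in H'.
    case: ifP => ux; case: ifP => ux'.
    + by case=> eq2; rewrite (eqP ux) (eqP ux') eq2.
    + by case=> eq1 _; move: uy'; rewrite -eq1 eqxx.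
    + by case=> eq1 _; move: uy; rewrite eq1 eqxx.
    + case=> eq1; rewrite ux /= in H; rewrite ux' /= in H'.
      case/andP: H => /eqP -> _; case/andP: H' => /eqP -> _.
      by rewrite eq1.
have := card_in_imset finj; rewrite -/(nedges _) => <-.
apply: (@leq_ltn_trans #|E :\ (x, y)|).
  by apply: subset_leq_card; apply/subsetP => z /imsetP[p pD ->]; apply: fD.
by rewrite /nedges -/E (cardsD1 (x, y) E) inE /= exy.
Qed.

Lemma proj_step (T : finType) (e : rel T) x y z w :
  irreflexive e -> e x y -> e z w ->
  proj x y z = proj x y w \/ contr e x y (proj x y z) (proj x y w).
Proof.
move=> ie exy ezw; have nxy : x != y by apply: contraTneq exy => ->; rewrite ie.
rewrite /proj /contr.
have [zy|zy] := eqVneq z y; have [wy|wy] := eqVneq w y.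
- by left.
- subst z; rewrite eqxx (negbTE wy); have [wx|wx] := eqVneq w x; first by left.
  by right; rewrite nxy /= ezw orbT.
- subst w; rewrite eqxx (negbTE zy); have [zx|zx] := eqVneq z x; first by left.
  by right; rewrite nxy /= ezw !orbT.
- right; rewrite (negbTE zy) (negbTE wy) ezw /= andbT; apply: contraTneq ezw => ->; by rewrite ie.
Qed.

Lemma proj_walk (T : finType) (e : rel T) x y a p :
  irreflexive e -> e x y -> path e a p ->
  exists p', [/\ path (contr e x y) (proj x y a) p',
     last (proj x y a) p' = proj x y (last a p)
   & {subset proj x y a :: p' <= [seq proj x y z | z <- a :: p]}].
Proof.
move=> ie exy; elim: p a => [|b p IH] a /=.
  by move=> _; exists [::]; split => // w; rewrite !inE.
case/andP=> eab pp; have [p'' [h1 h2 h3]] := IH b pp.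
have [eq|ct] := proj_step ie exy eab.
  by exists p''; rewrite eq; split => // w win; rewrite inE (h3 _ win) orbT.
exists (proj x y b :: p''); split => //=; first by rewrite ct.
move=> w; rewrite inE => /orP[/eqP->|win]; first by rewrite inE eqxx.
by rewrite inE (h3 _ win) orbT.
Qed.

Lemma merge_proj (T : finType) (x y : T) (A : {set T}) a :
  x != y -> a \in A -> proj x y a \in merge x y A.
Proof.
move=> nxy aA; rewrite /proj inE; have [ay|ay] := eqVneq a y.
  by rewrite nxy eqxx -ay aA orbT.
by rewrite ay aA.
Qed.

Lemma sep_contr (T : finType) (e : rel T) x y (A B Y : {set T}) :
  irreflexive e -> e x y ->
  sep (contr e x y) (merge x y A) (merge x y B) Y ->
  sep e A B [set z | proj x y z \in Y].
Proof.
move=> ie exy sY a p aA pp lB.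
have nxy : x != y by apply: contraTneq exy => ->; rewrite ie.
have [p' [h1 h2 h3]] := proj_walk ie exy pp.
have := sY _ p' (merge_proj nxy aA) h1; rewrite h2 => /(_ (merge_proj nxy lB)).
case/hasP => w /h3 /mapP[z zin ->] wY.
apply/hasP; exists z => //; change (z \in [set z0 | proj x y z0 \in Y]); rewrite inE; exact: wY.
Qed.

Lemma contr_path_noy (T : finType) (e : rel T) x y a p :
  path (contr e x y) a p -> y \notin p.
Proof.
elim: p a => [|b p IH] a //= /andP[/and4P[_ bny _ _] pp].
by rewrite inE negb_or eq_sym bny; exact: IH pp.
Qed.

Lemma connect_path (T : finType) (R rr : rel T) s p :
  path rr s p -> (forall u w, u \in s :: p -> w \in s :: p -> rr u w -> connect R u w) ->
  connect R s (last s p).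
Proof.
elim: p s => [|b p IH] s /=; first by move=> _ _; exact: connect0.
case/andP=> rsb pp H; apply: (connect_trans (H s b _ _ rsb)).
- exact: mem_head.
- by rewrite !inE eqxx orbT.
apply: IH pp _ => u w uin win; apply: H; by rewrite inE ?uin ?win orbT.
Qed.

Lemma lift (T : finType) (e : rel T) x y (A B : {set T}) k F :
  symmetric e -> e x y -> x != y ->
  family (contr e x y) (merge x y A) (merge x y B) k F -> exists F', family e A B k F'.
Proof.
move=> se exy nxy [fa fb].
pose W i := [set z | (z \in vs (F i)) || (z == y) && (x \in vs (F i))].
have yn : forall i, y \notin vs (F i).
  move=> i; have /and4P[p1 p2 _ _] := fa i.
  rewrite /vs inE negb_or (contr_path_noy p1) andbT.
  by move: p2; rewrite inE eq_sym => /andP[].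
pose P i (q : T * seq T) := ABpath e A B q && all (fun z => z \in W i) (vs q).
have [F' HF'] : exists F', forall i, P i (F' i).
  apply: fam_choice => i.
  have /and4P[p1 p2 p3 p4] := fa i.
  pose R := ind_rel e (W i).
  have inW : forall z, z \in vs (F i) -> z \in W i by move=> z zin; rewrite inE zin.
  have yW : x \in vs (F i) -> y \in W i by move=> xin; rewrite inE eqxx xin orbT.
  have xyW : x \in vs (F i) -> connect R x y /\ connect R y x.
    move=> xin; have xW := inW x xin; have yW' := yW xin.
    by split; apply: connect1; rewrite /R /ind_rel /= xW yW' ?(se y x) exy.
  have step : forall u w, u \in vs (F i) -> w \in vs (F i) -> contr e x y u w -> connect R u w.
    move=> u w uin win /and4P[_ _ _ /orP[/orP[euw|/andP[/eqP ux eyw]]|/andP[/eqP wx euy]]].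
    - by apply: connect1; rewrite /R /ind_rel /= euw !inW.
    - subst u; apply: (connect_trans (proj1 (xyW uin))); apply: connect1.
      by rewrite /R /ind_rel /= eyw yW // inW.
    - subst w; apply: (connect_trans _ (proj2 (xyW win))); apply: connect1.
      by rewrite /R /ind_rel /= euy yW // inW.
  have cst : connect R (F i).1 (last (F i).1 (F i).2) := connect_path p1 step.
  have [a [aA aW ca]] : exists a, [/\ a \in A, a \in W i & connect R a (F i).1].
    move: p2; rewrite inE => /andP[_ /orP[sA|/andP[/eqP sx yA]]].
      by exists (F i).1; split; [done | apply: inW; exact: mem_head | exact: connect0].
    have xin : x \in vs (F i) by rewrite -sx; exact: mem_head.
    by exists y; split; [done | exact: yW | rewrite sx; exact: (proj2 (xyW xin))].
  have [b [bB cb]] : exists b, b \in B /\ connect R (last (F i).1 (F i).2) b.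
    move: p3; rewrite inE => /andP[_ /orP[tB|/andP[/eqP tx yB]]].
      by exists (last (F i).1 (F i).2); split => //; exact: connect0.
    have xin : x \in vs (F i) by rewrite -tx /vs lastI mem_rcons mem_head.
    by exists y; split => //; rewrite tx; exact: (proj1 (xyW xin)).
  have : connect R a b by apply: (connect_trans ca); exact: (connect_trans cst cb).
  case/connectP => p pp lp; move: bB; rewrite lp.
  case: (shortenP pp) => p' pp' up' _ bB.
  have [sub pe] := path_ind_sub pp' aW.
  exists (a, p'); rewrite /P /ABpath up' pe aA bB /=.
  by rewrite aW; apply/allP => z zp; apply: sub; rewrite inE zp orbT.
exists F'; split.
  by move=> i; case/andP: (HF' i).
move=> i j ij z zi zj.
have /andP[_ /allP Wi] := HF' i; have /andP[_ /allP Wj] := HF' j.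
move: (Wi z zi) (Wj z zj); rewrite !inE.
case/orP=> [z1|/andP[/eqP zy x1]]; case/orP=> [z2|/andP[/eqP zy' x2]].
- exact: (fb i j ij z).
- by move: (yn i); rewrite -zy' => /negP; apply.
- by move: (yn j); rewrite -zy => /negP; apply.
- exact: (fb i j ij x).
Qed.

Lemma base (T : finType) (e : rel T) (A B : {set T}) k :
  nedges e = 0 -> (forall X, sep e A B X -> k <= #|X|) -> exists F, family e A B k F.
Proof.
move=> n0 H.
have noe : forall u w, e u w = false.
  by move=> u w; apply/negP => euw; have := card0_eq n0 (u, w); rewrite inE /= euw.
have trivp : forall a p, path e a p -> p = [::] by move=> a [|b q] //=; rewrite noe.
have sAB : sep e A B (A :&: B).
  by move=> a p aA pp; rewrite (trivp a p pp) /= => aB; rewrite inE aA aB.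
have Hk := H _ sAB.
exists (fun i => (enum_val (widen_ord Hk i), [::])); split.
  move=> i; rewrite /ABpath /= andbT.
  by have := enum_valP (widen_ord Hk i); rewrite inE => /andP[-> ->].
move=> i j ij z; rewrite /vs /= !inE => /eqP -> /eqP /enum_val_inj /(congr1 val) /= eij.
by move: ij; rewrite (val_inj eij) eqxx.
Qed.

Lemma del_prefix (T : finType) (e : rel T) (X : {set T}) x y a q :
  path e a q -> ~~ has (mem X) (belast a q) -> x \in X -> y \in X -> path (del e x y) a q.
Proof.
move=> + + xX yX; elim: q a => [|b q IH] a //= /andP[eab pq] /norP[aX hq].
rewrite IH // andbT /del eab /=.
have ax : a != x by apply: contraNneq aX => ->.
have ay : a != y by apply: contraNneq aX => ->.
by rewrite (negbTE ax) (negbTE ay).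
Qed.

Lemma del_suffix (T : finType) (e : rel T) (X : {set T}) x y c q :
  path e c q -> ~~ has (mem X) q -> x \in X -> y \in X -> path (del e x y) c q.
Proof.
move=> + + xX yX; elim: q c => [|b q IH] c //= /andP[ecb pq] /norP[bX hq].
rewrite IH // andbT /del ecb /=.
have bx : b != x by apply: contraNneq bX => ->.
have bny : b != y by apply: contraNneq bX => ->.
by rewrite (negbTE bx) (negbTE bny) !andbF.
Qed.

Lemma sepA (T : finType) (e : rel T) (A B X Z : {set T}) x y :
  sep e A B X -> x \in X -> y \in X -> sep (del e x y) A X Z -> sep e A B Z.
Proof.
move=> sX xX yX sZ a p aA pp lB.
have [n [h1 h2 h3]] := trunc_first pp (sX a p aA pp lB).
have := sZ a (take n p) aA (del_prefix h1 h3 xX yX) h2.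
case/hasP=> w win wZ; apply/hasP; exists w => //.
by move: win; rewrite !inE => /orP[->//|/mem_take ->]; rewrite orbT.
Qed.

Lemma sepB (T : finType) (e : rel T) (A B X Z : {set T}) x y :
  sep e A B X -> x \in X -> y \in X -> sep (del e x y) X B Z -> sep e A B Z.
Proof.
move=> sX xX yX sZ a p aA pp lB.
have [c [q [h1 h2 h3 h4 [_ h6]]]] := trunc_last pp (sX a p aA pp lB).
have := sZ c q h1 (del_suffix h2 h4 xX yX); rewrite h3 => /(_ lB).
case/hasP=> w win wZ; apply/hasP; exists w => //; exact: h6.
Qed.

Lemma menger (T : finType) n : forall (e : rel T) (A B : {set T}) k,
  nedges e <= n -> symmetric e -> irreflexive e ->
  (forall X, sep e A B X -> k <= #|X|) -> exists F, family e A B k F.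
Proof.
elim: n => [|n IH] e A B k hn se ie H.
  by apply: base => //; apply/eqP; rewrite -leqn0.
have [n0|] := eqVneq (nedges e) 0; first exact: base.
rewrite -lt0n => /card_gt0P [[x y]]; rewrite inE /= => exy.
have nxy : x != y by apply: contraTneq exy => ->; rewrite ie.
case: (classic (exists Y : {set T}, sep (contr e x y) (merge x y A) (merge x y B) Y /\ #|Y| < k))
  => [[Y [sY cY]]|nY].
  pose X := [set z | proj x y z \in Y].
  have sX : sep e A B X := sep_contr ie exy sY.
  have kX := H X sX.
  have xY : x \in Y.
    apply: contraT => nx; have : #|X| <= #|Y|.
      apply: subset_leq_card; apply/subsetP => z; rewrite inE /proj.
      by case: ifP => // _ xY; rewrite xY in nx.
    by rewrite leqNgt (leq_trans cY kX).
  have cXk : #|X| <= k.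
    apply: (@leq_trans #|y |: Y|).
      apply: subset_leq_card; apply/subsetP => z; rewrite !inE /proj.
      by case: ifP => // _ ->; rewrite orbT.
    by rewrite cardsU1; case: (y \notin Y) => /=; [exact: cY | exact: ltnW].
  have xX : x \in X by rewrite inE /proj (negbTE nxy).
  have yX : y \in X by rewrite inE /proj eqxx.
  have hn0 : nedges (del e x y) <= n by rewrite -ltnS; exact: leq_trans (nedges_del exy) hn.
  have [F1 hF1] := IH (del e x y) A X k hn0 (del_sym x y se) (del_irr x y ie)
     (fun Z sZ => H Z (sepA sX xX yX sZ)).
  have [F2 hF2] := IH (del e x y) X B k hn0 (del_sym x y se) (del_irr x y ie)
     (fun Z sZ => H Z (sepB sX xX yX sZ)).
  exact: (glue sX cXk (fam_sub (@del_sub _ e x y) hF1) (fam_sub (@del_sub _ e x y) hF2)).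
have H' : forall Y, sep (contr e x y) (merge x y A) (merge x y B) Y -> k <= #|Y|.
  by move=> Y sY; rewrite leqNgt; apply/negP => c; apply: nY; exists Y.
have hn' : nedges (contr e x y) <= n.
  by rewrite -ltnS; exact: leq_trans (nedges_contr se exy nxy) hn.
have [F hF] := IH _ _ _ k hn' (contr_sym x y se) (contr_irr e x y) H'.
exact: lift se exy nxy hF.
Qed.

Lemma ev_nov (T : finType) (e : rel T) (v : T) a p :
  path [rel a b | [&& e a b, a != v & b != v]] a p -> v \notin p.
Proof.
elim: p a => [|b p IH] a //= /andP[/and3P[_ _ bv] pp].
by rewrite inE negb_or eq_sym bv; exact: IH pp.
Qed.

Lemma fan_from (T : finType) (e : rel T) (v : T) (S : {set T}) k :
  symmetric e -> irreflexive e -> v \notin S ->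
  (forall X, sep [rel a b | [&& e a b, a != v & b != v]] [set a | e v a] S X -> k <= #|X|) ->
  k_linked e v S k.
Proof.
move=> se ie vS H.
have sev : symmetric [rel a b | [&& e a b, a != v & b != v]].
  by move=> a b /=; rewrite se; case: (a != v); case: (b != v); rewrite ?andbF.
have iev : irreflexive [rel a b | [&& e a b, a != v & b != v]] by move=> a /=; rewrite ie.
have [F [fa fd]] := menger (leqnn _) sev iev H.
exists (fun i => vs (F i)); split.
  move=> i; have /and4P[p1 p2 p3 p4] := fa i.
  rewrite inE in p2.
  have av : (F i).1 != v by apply: contraTneq p2 => ->; rewrite ie.
  rewrite /path_to /vs /= p2 p3 andbT.
  have -> : path e (F i).1 (F i).2 by apply: sub_path p1 => a b /and3P[].
  have u1 : (F i).1 \notin (F i).2 by case/andP: p4.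
  have u2 : uniq (F i).2 by case/andP: p4.
  rewrite /= u1 u2 !andbT.
  by rewrite inE negb_or eq_sym av (ev_nov p1).
move=> i j ij z; rewrite inE => /orP[/eqP->//|zi]; rewrite inE => /orP[/eqP->//|zj].
by case: (fd i j ij z zi zj).
Qed.

Lemma ind_lift (T : finType) (e : rel T) (U Y : {set T}) v a p :
  (forall z, z \in Y = connect (induced_rel e U) v z) ->
  a \in Y -> path (induced_rel e U) a p -> path (induced_rel e Y) a p.
Proof.
move=> hY; elim: p a => [|b p IH] a //= aY /andP[rab pp].
have bY : b \in Y by rewrite hY; apply: (connect_trans _ (connect1 rab)); rewrite -hY.
rewrite IH // andbT /induced_rel /=.
by move: rab => /and3P[eab _ _]; rewrite eab aY bY.
Qed.

Lemma ind_ev (T : finType) (e : rel T) (U : {set T}) v a q :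
  path (induced_rel e U) a q -> v \notin a :: q ->
  path [rel a b | [&& e a b, a != v & b != v]] a q.
Proof.
elim: q a => [|b q IH] a //= /andP[/and3P[eab _ _] pq].
rewrite !inE !negb_or => /andP[av /andP[bv vq]].
rewrite eab (eq_sym a v) av (eq_sym b v) bv /=; apply: IH => //.
by rewrite inE negb_or bv vq.
Qed.

Theorem proposition1 (T : finType) (e : rel T) (r : T -> nat) (S : {set T}) :
  simple_graph e ->
  (vector_connectivity_set e r S <->
   (forall X : {set T}, X != set0 -> induced_connected e X ->
      #|nbhd e X| < Rmax r X -> S :&: X != set0)).
Proof.
case=> se ie; split.
  move=> vcs X _ _ hlt; apply/negP => /eqP SX0.
  suff : Rmax r X <= #|nbhd e X| by rewrite leqNgt hlt.
  apply/bigmax_leqP => x xX.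
  have xS : x \notin S.
    apply/negP => xS; have : x \in S :&: X by [rewrite inE xS xX].
    by rewrite SX0 inE.
  have [P [fp fd]] := vcs x xS.
  have hf : forall i, exists y, (y \in P i) && (y \in nbhd e X).
    move=> i; have /and3P[pp _ lS] := fp i.
    have lX : last x (P i) \notin X.
      apply/negP => lX; have : last x (P i) \in S :&: X by [rewrite inE lS lX].
      by rewrite SX0 inE.
    have [y [z [h1 h2 h3 h4 h5]]] := first_exit (X := mem X) pp xX lX.
    have h4' : z \in X := h4.
    exists y; rewrite h1 /nbhd inE h2 /=; apply/existsP; exists z; by rewrite h4' h5.
  pose f i := xchoose (hf i).
  have fP : forall i, (f i \in P i) && (f i \in nbhd e X) by move=> i; exact: (xchooseP (hf i)).
  have finj : injective f.
    move=> i j fij; apply/eqP; apply: contraT => ij.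
    have /andP[fi fn] := fP i; have /andP[fj _] := fP j.
    have := fd i j ij (f i); rewrite !inE fi fij fj !orbT => /(_ isT isT) fx.
    by move: fn; rewrite fij fx /nbhd inE xX.
  have <- : #|[set f i | i in 'I_(r x)]| = r x by rewrite card_imset // card_ord.
  apply: subset_leq_card; apply/subsetP => z /imsetP[i _ ->].
  by case/andP: (fP i).
move=> H v vS; apply: fan_from => // X sX.
pose U := ~: (X :\ v).
pose Y := [set z | connect (induced_rel e U) v z].
have hY : forall z, z \in Y = connect (induced_rel e U) v z by move=> z; rewrite inE.
have vU : v \in U by rewrite !inE eqxx.
have vY : v \in Y by rewrite hY connect0.
have YU : forall z, z \in Y -> z \in U.
  move=> z; rewrite hY => /connectP[p pp ->].
  have [sub _] := path_ind_sub pp vU; apply: sub; exact: mem_last.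
have CY : forall z, z \in Y -> connect (induced_rel e Y) v z.
  move=> z; rewrite hY => /connectP[p pp ->]; apply/connectP; exists p => //.
  exact: ind_lift hY vY pp.
have symY : symmetric (induced_rel e Y).
  by move=> a b; rewrite /induced_rel /= se; case: (a \in Y); case: (b \in Y); rewrite ?andbF.
have Yconn : induced_connected e Y.
  move=> a b aY bY; apply: (connect_trans (y := v)); last exact: CY.
  by rewrite (sym_connect_sym symY); exact: CY.
have NY : #|nbhd e Y| <= #|X|.
  apply: subset_leq_card; apply/subsetP => z; rewrite /nbhd inE => /andP[zY /existsP[y /andP[yY eyz]]].
  apply: contraNT zY => zX; rewrite hY.
  apply: (connect_trans (y := y)); first by rewrite -hY.
  by apply: connect1; rewrite /induced_rel /= eyz YU //= !inE negb_and negbK zX orbT.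
have RY : r v <= Rmax r Y.
  by rewrite /Rmax; apply: leq_bigmax_cond.
rewrite leqNgt; apply/negP => lt.
have Y0 : Y != set0 by apply/set0Pn; exists v.
have := H Y Y0 Yconn (leq_ltn_trans NY (leq_trans lt RY)).
case/set0Pn => s; rewrite inE => /andP[sS sY].
move: sY; rewrite hY => /connectP[p pp sl].
move: sS; rewrite sl; case: (shortenP pp) => p' pp' up' _.
case: p' pp' up' => [|a q] /=; first by rewrite (negbTE vS).
case/andP=> rva pq /andP[vnot uq] lS.
have aN : a \in [set a | e v a] by rewrite inE; case/and3P: rva.
have aU : a \in U by case/and3P: rva.
have hX := sX a q aN (ind_ev pq vnot) lS.
have [sub _] := path_ind_sub pq aU.
case/hasP: hX => w win wX.
have wv : w != v by apply: contraNneq vnot => <-.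
have wX' : w \in X := wX.
by move: (sub w win); rewrite !inE wv wX'.
Qed.
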